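(* Over directed graphs, $\varphi_{\mathit{Lin}}(x)$ is expressible by an ACR-GNN. It can be achieved using only 3 layers and no aggregation over the out-neighbourhood.
   Context: A directed graph of dimension $d$ is $G=(V,E,\lambda)$ with finite node set $V$, loop-free edge set $E\subseteq V\times V$ and labelling $\lambda:V\to\{0,1\}^d$; $\overleftarrow{N}_G(v)$ and $\overrightarrow{N}_G(v)$ denote the in- and out-neighbourhoods of $v$. An ACR-GNN layer for directed graphs is a tuple $(\overleftarrow{\mathsf{agg}}, \overrightarrow{\mathsf{agg}}, \mathsf{comb}, \mathsf{read})$, where the aggregation and readout functions map multisets of vectors to vectors; applied to $G=(V,E,\lambda)$ it yields $G'=(V,E,\lambda')$ with $\lambda'(v)=\mathsf{comb}\big(\lambda(v), \overleftarrow{\mathsf{agg}}(\{\!\{\lambda(w)\}\!\}_{w\in\overleftarrow{N}_G(v)}), \overrightarrow{\mathsf{agg}}(\{\!\{\lambda(w)\}\!\}_{w\in\overrightarrow{N}_G(v)}), \mathsf{read}(\{\!\{\lambda(w)\}\!\}_{w\in V})\big)$, where $\{\!\{\cdot\}\!\}$ denotes a multiset. An ACR-GNN classifier consists of a fixed number of such layers followed by a classification function from vectors to truth values, giving a truth value for each node. $\varphi_{\mathit{Lin}}(x)$ is the node classifier accepting a node of a graph $G$ if and only if the edge relation of $G$ is a strict linear order. *)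

(* Defs.v *)
From HB Require Import structures.
From mathcomp Require Import all_boot all_order all_algebra.
Set Implicit Arguments. Unset Strict Implicit. Unset Printing Implicit Defensive.
Import Order.TTheory GRing.Theory Num.Theory.
Local Open Scope ring_scope.

Record digraph (d : nat) := Digraph {
  node : finType;
  edge : rel node;
  edge_loopfree : irreflexive edge;
  label : node -> 'I_d -> bool }.
Arguments node {d} _.
Arguments edge {d} _.
Arguments label {d} _.

Definition in_nbh d (G : digraph d) (v : node G) : {set node G} :=
  [set w | edge G w v].
Definition out_nbh d (G : digraph d) (v : node G) : {set node G} :=
  [set w | edge G v w].

(* Multisets of vectors, represented by their multiplicity function. *)
Definition mset (R : realFieldType) (m : nat) := 'rV[R]_m -> nat.

Definition mset_of (R : realFieldType) m (V : finType) (f : V -> 'rV[R]_m)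
  (A : {set V}) : mset R m :=
  fun x => #|[set w in A | f w == x]|.

Record layer (R : realFieldType) (m n : nat) := Layer {
  dim_in : nat; dim_out : nat; dim_read : nat;
  agg_in  : mset R m -> 'rV[R]_dim_in;
  agg_out : mset R m -> 'rV[R]_dim_out;
  comb    : 'rV[R]_m -> 'rV[R]_dim_in -> 'rV[R]_dim_out -> 'rV[R]_dim_read -> 'rV[R]_n;
  read    : mset R m -> 'rV[R]_dim_read }.
Arguments dim_in {R m n} _.
Arguments dim_out {R m n} _.
Arguments dim_read {R m n} _.
Arguments agg_in {R m n} _ _.
Arguments agg_out {R m n} _ _.
Arguments comb {R m n} _ _ _ _ _.
Arguments read {R m n} _ _.

Definition apply_layer (R : realFieldType) m n (L : layer R m n) d (G : digraph d)
  (f : node G -> 'rV[R]_m) : node G -> 'rV[R]_n :=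
  fun v => comb L (f v) (agg_in L (mset_of f (in_nbh v)))
                  (agg_out L (mset_of f (out_nbh v)))
                  (read L (mset_of f [set: node G])).

(* The layer does not aggregate over the out-neighbourhood: its
   out-aggregation function is constant. *)
Definition no_out_agg (R : realFieldType) m n (L : layer R m n) : Prop :=
  forall M1 M2 : mset R m, agg_out L M1 = agg_out L M2.

Inductive gnn (R : realFieldType) : nat -> nat -> Type :=
| GNil : forall n, gnn R n n
| GCons : forall m k n, layer R m k -> gnn R k n -> gnn R m n.

Fixpoint num_layers (R : realFieldType) m n (N : gnn R m n) : nat :=
  match N with GNil _ => 0%N | GCons _ _ _ _ N' => (num_layers N').+1 end.

Fixpoint all_no_out_agg (R : realFieldType) m n (N : gnn R m n) : Prop :=
  match N with GNil _ => True | GCons _ _ _ L N' => no_out_agg L /\ all_no_out_agg N' end.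

Fixpoint run_gnn (R : realFieldType) m n (N : gnn R m n) d (G : digraph d) :
  (node G -> 'rV[R]_m) -> node G -> 'rV[R]_n :=
  match N in gnn _ m n return (node G -> 'rV[R]_m) -> node G -> 'rV[R]_n with
  | GNil _ => fun f => f
  | GCons _ _ _ L N' => fun f => @run_gnn R _ _ N' d G (@apply_layer R _ _ L d G f)
  end.

Arguments run_gnn {R m n} _ {d} _ _ _.
Arguments apply_layer {R m n} _ {d} _ _ _.

Definition init_feat (R : realFieldType) d (G : digraph d) (v : node G) : 'rV[R]_d :=
  \row_i (label G v i)%:R.

Record classifier (R : realFieldType) (d : nat) := Classifier {
  out_dim : nat;
  layers : gnn R d out_dim;
  cls : 'rV[R]_out_dim -> bool }.
Arguments out_dim {R d} _.
Arguments layers {R d} _.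
Arguments cls {R d} _ _.

Definition classify (R : realFieldType) d (C : classifier R d) (G : digraph d)
  (v : node G) : bool :=
  cls C (run_gnn (layers C) G (@init_feat R d G) v).

Definition strict_linear_order (V : finType) (E : rel V) : Prop :=
  irreflexive E /\ transitive E /\ (forall x y, x != y -> E x y || E y x).

Definition phi_Lin d (G : digraph d) (v : node G) : Prop :=
  strict_linear_order (edge G).

Arguments classify {R d} _ _ _.
Arguments phi_Lin {d} _ _.
Arguments init_feat {R d} _ _.
Arguments num_layers {R m n} _.
Arguments all_no_out_agg {R m n} _.

(* Main.v *)
Require Import Defs.
From HB Require Import structures.
From Stdlib Require Import ClassicalEpsilon FunctionalExtensionality.
From mathcomp Require Import all_boot all_order all_algebra.
Set Implicit Arguments. Unset Strict Implicit. Unset Printing Implicit Defensive.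
Import Order.TTheory GRing.Theory Num.Theory.

Definition pb (P : Prop) : bool := if excluded_middle_informative P then true else false.
Lemma pbP P : reflect P (pb P).
Proof. by rewrite /pb; case: excluded_middle_informative => h; constructor. Qed.
Arguments pbP {P}.

Lemma pigeon (V : finType) (A : {set V}) (g : V -> nat) :
  {in A &, injective g} -> (forall w, w \in A -> g w < #|A|) ->
  forall c, c < #|A| -> exists2 w, w \in A & g w = c.
Proof.
move=> ginj gb c hc.
have U : uniq (map g (enum A)).
  rewrite map_inj_in_uniq ?enum_uniq // => x y; rewrite !mem_enum; exact: ginj.
have S : {subset map g (enum A) <= iota 0 #|A|}.
  move=> x /mapP [w]; rewrite mem_enum => wA ->; rewrite mem_iota add0n; exact: gb.
have le : size (iota 0 #|A|) <= size (map g (enum A)) by rewrite size_iota size_map cardE.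
have [_ E] := uniq_min_size U S le.
have : c \in iota 0 #|A| by rewrite mem_iota.
rewrite -E => /mapP [w]; rewrite mem_enum => wA ->; by exists w.
Qed.

Section Comb.
Variable V : finType.
Variable E : rel V.
Definition indeg (v : V) := #|[set w | E w v]|.

Lemma lin_lt : strict_linear_order E -> forall x y, E x y -> indeg x < indeg y.
Proof.
move=> [irr [tr _]] x y exy; apply: proper_card; apply/properP; split.
  by apply/subsetP => w; rewrite !inE => ewx; exact: tr ewx exy.
by exists x; rewrite !inE ?irr.
Qed.

Lemma lin_inj : strict_linear_order E -> injective indeg.
Proof.
move=> L x y h; apply/eqP; apply/negPn/negP => nxy.
have [_ [_ tot]] := L; case/orP: (tot _ _ nxy) => /(lin_lt L); by rewrite h ltnn.
Qed.

Lemma lin_nbr : strict_linear_order E -> forall v c, c < indeg v ->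
  exists2 w, E w v & indeg w = c.
Proof.
move=> L v c hc.
have i1 : {in [set w | E w v] &, injective indeg}.
  by move=> x y _ _; apply: lin_inj.
have i2 : forall w, w \in [set w | E w v] -> indeg w < #|[set w | E w v]|.
  by move=> w; rewrite inE; apply: lin_lt.
have [w] := @pigeon V [set w | E w v] indeg i1 i2 c hc.
by rewrite inE => ? ?; exists w.
Qed.

Lemma lin_char (inj : injective indeg) :
  (forall x y, E x y = (indeg x < indeg y)) -> strict_linear_order E.
Proof.
move=> h; split; [|split].
- by move=> x; rewrite h ltnn.
- by move=> y x z; rewrite !h; apply: ltn_trans.
- move=> x y nxy; rewrite !h; have: indeg x != indeg y.
    by apply: contra nxy => /eqP /inj ->.
  by rewrite neq_ltn.
Qed.
End Comb.
Section GNN.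
Variable R : realFieldType.
Local Open Scope ring_scope.

Definition enc (n : nat) : 'rV[R]_1 := const_mx (n%:R).
Lemma enc_inj : injective enc.
Proof.
move=> a b h; have := congr1 (fun M : 'rV[R]_1 => M 0 0) h; rewrite !mxE.
by move/eqP; rewrite eqr_nat => /eqP.
Qed.

Definition Q (k : nat) (M : mset R 1) : Prop :=
  forall x, M x = (if pb (exists2 c, (c < k)%N & x = enc c) then 1 else 0)%N.

Lemma Q_uniq k k' M : Q k M -> Q k' M -> k = k'.
Proof.
suff H : forall k k', Q k M -> Q k' M -> (k < k')%N -> False.
  move=> h h'; case: (ltngtP k k') => // [/(H _ _ h h')|/(H _ _ h' h)] //.
move=> {}k {}k' h h' lt; have := h (enc k); rewrite h'.
case: pbP => [_|[]]; last by exists k.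
case: pbP => // -[c ck /enc_inj ckE]; by rewrite ckE ltnn in ck.
Qed.

Definition decQ (M : mset R 1) : 'rV[R]_1 :=
  match excluded_middle_informative (exists k, Q k M) with
  | left H => enc (proj1_sig (constructive_indefinite_description _ H)).+1
  | right _ => enc 0 end.

Lemma decQP k M : (exists k', enc k = enc k' /\ decQ M = enc k'.+1) <-> Q k M.
Proof.
rewrite /decQ; case: excluded_middle_informative => [H|H].
  case: constructive_indefinite_description => k0 /= hk0; split.
    by move=> [k' [/enc_inj <- /enc_inj [<-]]].
  by move=> hk; exists k; split=> //; rewrite (Q_uniq hk0 hk).
split; first by move=> [k' [_ /enc_inj]].
by move=> hk; case: H; exists k.
Qed.

Definition cnt d (M : mset R d) : nat :=
  (\sum_(x : {ffun 'I_d -> bool}) M (\row_i ((x i : nat)%:R)))%N.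

Lemma row_inj d (a b : {ffun 'I_d -> bool}) :
  (\row_i ((a i : nat)%:R) : 'rV[R]_d) = \row_i ((b i : nat)%:R) -> a = b.
Proof.
move=> h; apply/ffunP => i; have := congr1 (fun M : 'rV[R]_d => M 0 i) h.
rewrite !mxE => /eqP; rewrite eqr_nat; by case: (a i); case: (b i).
Qed.

Lemma card_sum (V : finType) (A : {set V}) (P : pred V) :
  #|[set w in A | P w]| = (\sum_(w in A) (P w : nat))%N.
Proof.
rewrite -sum1_card (eq_bigl (fun w => (w \in A) && P w)); last by move=> w; rewrite inE.
by rewrite big_mkcondr /=; apply: eq_bigr => w _; case: (P w).
Qed.

Lemma cnt_init d (G : digraph d) (A : {set node G}) :
  cnt (mset_of (@init_feat R d G) A) = #|A|.
Proof.
rewrite /cnt /mset_of.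
under eq_bigr => x _ do rewrite card_sum.
rewrite exchange_big /= -sum1_card; apply: eq_bigr => w _.
pose x0 : {ffun 'I_d -> bool} := [ffun i => label G w i].
have e0 : @init_feat R d G w = \row_i ((x0 i : nat)%:R).
  by apply/rowP => i; rewrite !mxE ffunE.
rewrite (bigD1 x0) //= e0 eqxx big1 // => x nx.
apply/eqP; rewrite eqb0; apply: contra nx => /eqP h; by rewrite (row_inj h).
Qed.
End GNN.
Section Main.
Variable R : realFieldType.
Variable d : nat.
Local Open Scope ring_scope.

Definition L1 : layer R d 1 := @Layer R d 1 1 1 1 (fun M => enc R (cnt M))
  (fun _ => enc R 0) (fun _ a _ _ => a) (fun _ => enc R 0).
Definition L2 : layer R 1 1 := @Layer R 1 1 1 1 1 (@decQ R) (fun _ => enc R 0)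
  (fun own a _ r => enc R (pb ((exists k, own = enc R k /\ a = enc R k.+1) /\ r = enc R 1)))
  (fun M => enc R (pb (forall x, (M x <= 1)%N))).
Definition L3 : layer R 1 1 := @Layer R 1 1 1 1 1 (fun _ => enc R 0) (fun _ => enc R 0)
  (fun _ _ _ r => r) (fun M => enc R (pb (forall x, (0 < M x)%N -> x = enc R 1))).
Definition C : classifier R d :=
  @Classifier R d 1 (GCons L1 (GCons L2 (GCons L3 (GNil R 1)))) (fun x => pb (x = enc R 1)).

Lemma final (V : finType) (E : rel V) :
  (forall w, Q (indeg E w) (fun x => #|[set u in [set u | E u w] | enc R (indeg E u) == x]|) /\
     forall x, (#|[set u in [set: V] | enc R (indeg E u) == x]| <= 1)%N)
  <-> strict_linear_order E.
Proof.
split=> [H|L].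
  have inj : injective (indeg E).
    move=> a b h; have := (H a).2 (enc R (indeg E a)).
    move/card_le1_eqP => /(_ b a); rewrite !inE h eqxx; by apply.
  apply: (lin_char inj) => x y; have hQ := (H y).1; apply/idP/idP.
    move=> exy; have := hQ (enc R (indeg E x)).
    case: pbP => [[c cy /enc_inj ->] //| _ ] h0; exfalso.
    have : x \in [set u in [set u | E u y] | enc R (indeg E u) == enc R (indeg E x)].
      by rewrite !inE exy eqxx.
    by move/eqP: h0; rewrite cards_eq0 => /eqP ->; rewrite inE.
  move=> lt; have := hQ (enc R (indeg E x)); case: pbP => [_|[]]; last by exists (indeg E x).
  move=> h1; have : (0 < #|[set u in [set u | E u y] | enc R (indeg E u) == enc R (indeg E x)]|)%N.
    by rewrite h1.
  by rewrite card_gt0 => /set0Pn [u]; rewrite !inE => /andP [eu /eqP /enc_inj /inj eq]; rewrite -eq.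
move=> w; split.
  move=> x; case: pbP => [[c ck ->]|nx].
    have [u eu iu] := lin_nbr L ck.
    have -> : [set u0 in [set u | E u w] | enc R (indeg E u0) == enc R c] = [set u].
      apply/setP => u0; rewrite !inE; apply/andP/eqP.
        by move=> [_ /eqP /enc_inj h]; apply: (lin_inj L); rewrite h iu.
      by move=> ->; rewrite eu iu eqxx.
    by rewrite cards1.
  apply/eqP; rewrite cards_eq0; apply/eqP/setP => u; rewrite !inE.
  apply/negbTE/andP => -[e /eqP h]; apply: nx; exists (indeg E u).
    exact: lin_lt L _ _ e.
  by rewrite h.
move=> x; apply/card_le1_eqP => a b; rewrite !inE => /andP[_ /eqP ha] /andP[_ /eqP hb].
by apply: (lin_inj L); apply: (@enc_inj R); rewrite ha hb.
Qed.

Lemma main (G : digraph d) (v : node G) : classify C G v <-> phi_Lin G v.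
Proof.
rewrite /classify /=.
set f1 := apply_layer L1 G (@init_feat R d G).
have e1 : f1 = fun v => enc R (indeg (edge G) v).
  by apply: functional_extensionality => w; rewrite /f1 /apply_layer /= cnt_init.
rewrite e1.
set f1' := (fun v : node G => enc R (indeg (edge G) v)).
pose P2 w := Q (indeg (edge G) w) (mset_of f1' (in_nbh w)) /\
   forall x, (mset_of f1' [set: node G] x <= 1)%N.
have e2 : apply_layer L2 G f1' = fun w => enc R (pb (P2 w)).
  apply: functional_extensionality => w; rewrite /apply_layer /=.
  congr (enc R (nat_of_bool _)); apply/idP/idP => /pbP H; apply/pbP; rewrite /P2 in H *.
    move: H => [/decQP h /enc_inj]; case: pbP => // hg _; split => //.
  move: H => [hq hg]; split; first exact/decQP.
  by case: pbP.
rewrite e2.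
have epb : forall P, (enc R (pb P) = enc R 1) <-> P.
  by move=> P; split; [move/enc_inj; case: pbP | move=> h; case: pbP].
suff K : (forall x : 'rV[R]_1, (0 < mset_of (fun w => enc R (pb (P2 w))) [set: node G] x)%N
   -> x = enc R 1) <-> phi_Lin G v.
  split=> H.
    by move/pbP: H => /epb /K.
  by apply/pbP; apply/epb; apply/K.
suff K2 : (forall w, P2 w) <-> phi_Lin G v.
  split.
    move=> h; apply/K2 => w; apply/(epb (P2 w)); apply: h; rewrite /mset_of card_gt0; apply/set0Pn; exists w; rewrite inE in_setT eqxx. exact: erefl.
  move/K2 => h x; rewrite /mset_of card_gt0 => /set0Pn [w]; rewrite !inE => /eqP <-; exact/(epb (P2 w)).
rewrite /P2 /phi_Lin /f1' /mset_of.
exact: final.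
Qed.
End Main.

Theorem theorem2 :
  forall (R : realFieldType) (d : nat),
  exists C : classifier R d,
    num_layers (layers C) = 3%N /\ all_no_out_agg (layers C) /\
    forall (G : digraph d) (v : node G), classify C G v <-> phi_Lin G v.
Proof.
move=> R d; exists (C R d); split; first by [].
split; last exact: main.
by rewrite /=; do !split.
Qed.
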